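(* Let $L\ge 1$ and let $G=\mathbb{Z}_L^2=(V,E)$ be the $L\times L$ square lattice with periodic boundary conditions (the discrete torus), with $m=|E|=2L^2$ edges. Let $A\subseteq E$ be a random bond configuration of bond percolation with parameter $p=1/2$, i.e. each edge is included in $A$ independently with probability $1/2$. For the loop configuration associated with $A$ (defined in the context), let $N_1(A)$ be the number of edges $e\in A$ whose two associated loop segments belong to the same loop, and $N_2(A)$ the number of edges $e\in A$ whose two associated loop segments belong to distinct loops. Set $\mathcal{L}_1=N_1(A)/m$ and $\mathcal{L}_2=N_2(A)/m$. Then for every $L$, $$\mathbb{E}\,\mathcal{L}_1=\mathbb{E}\,\mathcal{L}_2=\tfrac14 .$$
   Context: Loop (Baxter–Kelland–Wu) configuration: the medial graph of $G$ (embedded on the torus) has one vertex $v_e$ at the midpoint of each edge $e\in E$, and a medial edge joining $v_e$ and $v_{e'}$ whenever $e,e'$ are consecutive edges on the boundary of a common face $f$ and share an endpoint $x$. Thus the four medial edges at $v_e$ are indexed by pairs $(x,f)$ with $x$ an endpoint of $e$ and $f$ one of the two faces adjacent to $e$. Given $A\subseteq E$, at each $v_e$ the four incident medial edges are paired into two non-crossing arcs: if $e\in A$ (occupied), $(x,f)$ is paired with $(y,f)$ for each adjacent face $f$ (where $x,y$ are the endpoints of $e$), so the arcs run alongside $e$ on either side without crossing it; if $e\notin A$, $(x,f)$ is paired with $(x,f')$ for each endpoint $x$ (where $f,f'$ are the two faces adjacent to $e$), so the arcs cross $e$. Following these pairings decomposes the medial edges into disjoint closed curves, the loops. For an occupied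 edge $e\in A$, its two associated loop segments are the two arcs at $v_e$ running alongside $e$ (one on each side). *)

(* Defs.v *)
From mathcomp Require Import all_boot all_order all_algebra.
Set Implicit Arguments. Unset Strict Implicit. Unset Printing Implicit Defensive.
Import GRing.Theory Num.Theory.
Local Open Scope ring_scope.

(* Edges: (i, j, d); d = false is the horizontal edge (i,j)--(i+1,j),
   d = true is the vertical edge (i,j)--(i,j+1). *)
Definition edge (L : nat) : finType := ('I_L * 'I_L * bool)%type.

Definition hedge (L : nat) (i j : 'I_L) : edge L := (i, j, false).
Definition vedge (L : nat) (i j : 'I_L) : edge L := (i, j, true).

(* Half-edges of the medial graph at v_e: (e, s, t), where s selects the
   endpoint of e (false = start, true = end) and t selects the adjacent face
   (for horizontal edges false = below, true = above; for vertical edges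
   false = left, true = right).  They index the four medial edges at v_e. *)
Definition half (L : nat) : finType := (edge L * bool * bool)%type.

(* tau: the medial edge at corner (x, f) joins the half-edge of e to the
   half-edge of the edge e' consecutive to e on the boundary of face f
   sharing endpoint x.  Face (i,j) is the square with lower-left corner (i,j). *)
Definition tau (L : nat) (h : half L) : half L :=
  let: (e, s, t) := h in
  let: (i, j, d) := e in
  if ~~ d then
    match s, t with
    | false, true  => (vedge i j, false, true)
    | true , true  => (vedge (ordS i) j, false, false)
    | true , false => (vedge (ordS i) (ord_pred j), true, false)
    | false, false => (vedge i (ord_pred j), true, true)
    end
  else
    match s, t with
    | false, true  => (hedge i j, false, true)
    | true , true  => (hedge i (ordS j), false, false)
    | false, false => (hedge (ord_pred i) j, true, true)
    | true , false => (hedge (ord_pred i) (ordS j), true, false)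
    end.

(* sigma_A: the pairing at v_e.  Occupied edge: arcs run alongside e
   (same face, other endpoint).  Vacant edge: arcs cross e
   (same endpoint, other face). *)
Definition sigma (L : nat) (A : {set edge L}) (h : half L) : half L :=
  let: (e, s, t) := h in
  if e \in A then (e, ~~ s, t) else (e, s, ~~ t).

Definition loop_rel (L : nat) (A : {set edge L}) : rel (half L) :=
  fun x y => (y == sigma A x) || (y == tau x).

Definition same_loop (L : nat) (A : {set edge L}) (x y : half L) : bool :=
  connect (loop_rel A) x y.

(* For e in A, its two loop segments are the arcs (e,false,t)--(e,true,t),
   t = false, true; the loop containing the segment on side t is the loop
   containing the half-edge (e,false,t). *)
Definition N1 (L : nat) (A : {set edge L}) : nat :=
  #|[set e in A | same_loop A (e, false, false) (e, false, true)]|.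

Definition N2 (L : nat) (A : {set edge L}) : nat :=
  #|[set e in A | ~~ same_loop A (e, false, false) (e, false, true)]|.

Definition nedges (L : nat) : nat := #|{: edge L}|.

Definition calL1 (L : nat) (A : {set edge L}) : rat := (N1 A)%:R / (nedges L)%:R.
Definition calL2 (L : nat) (A : {set edge L}) : rat := (N2 A)%:R / (nedges L)%:R.

Definition perc_weight (L : nat) (p : rat) (A : {set edge L}) : rat :=
  p ^+ #|A| * (1 - p) ^+ (nedges L - #|A|).

Definition perc_expect (L : nat) (p : rat) (X : {set edge L} -> rat) : rat :=
  \sum_(A : {set edge L}) perc_weight p A * X A.

(* Main.v *)
Require Import Defs.
From mathcomp Require Import all_boot all_order all_algebra ring.
Set Implicit Arguments. Unset Strict Implicit. Unset Printing Implicit Defensive.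
Lemma iter_periodic (T : Type) (g : T -> T) k x n :
  iter k g x = x -> iter n g x = iter (n %% k) g x.
Proof.
move=> hk; rewrite {1}(divn_eq n k) addnC iterD; congr iter.
elim: (n %/ k) => [|q IH]; first by [].
by rewrite mulSn iterD IH hk.
Qed.

Lemma toggle_perm (T : finType) (f g : T -> T) (P : pred T) (a d : T) :
  injective f -> injective g -> a != d -> P a -> P d ->
  (forall x, P (f x) = P x) ->
  (forall x, P x -> g x = f (if x == a then d else if x == d then a else x)) ->
  fconnect g a d = ~~ fconnect f a d.
Proof.
move=> injf injg nad Pa Pd Pf hg.
have Pit n x : P x -> P (iter n f x).
  by move=> Px; elim: n => //= n IH; rewrite Pf.
case: (boolP (fconnect f a d)) => cfad /=.
- set k := findex f a d.
  have hk : iter k f a = d by apply: iter_findex.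
  have klt : k < order f a by apply: findex_max.
  have k0 : k != 0 by rewrite /k findex_eq0.
  have neqa i : 0 < i < order f a -> iter i f a != a.
    move=> /andP[i0 io]; apply/eqP => h.
    have := findex_iter io; rewrite h findex0 => h0.
    by rewrite -h0 in i0.
  have it j : j < k -> iter j.+1 g d = iter j.+1 f a.
    elim: j => [|j IH] jk.
      by rewrite /= hg // eq_sym (negbTE nad) eqxx.
    rewrite iterS IH ?(ltnW jk) //.
    rewrite hg ?Pit //.
    have n1 : iter j.+1 f a != a by apply: neqa; rewrite ltn0Sn /= (ltn_trans jk klt).
    have n2 : iter j.+1 f a != d.
      apply/eqP => h; have := findex_iter (ltn_trans jk klt).
      by rewrite h -/k => e; rewrite e ltnn in jk.
    by rewrite (negbTE n1) (negbTE n2).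
  have kp : 0 < k by rewrite lt0n.
  have per : iter k g d = d.
    by rewrite -(prednK kp) it ?prednK // ltn_predL.
  rewrite fconnect_sym //; apply/negP => /iter_findex.
  rewrite (iter_periodic _ per).
  have := ltn_pmod (findex g d a) kp.
  case: (findex g d a %% k) => [|i] ik.
    by move=> /= h; rewrite h eqxx in nad.
  rewrite (it _ (ltnW ik)) => h; move: (neqa i.+1); rewrite h eqxx /= (ltn_trans ik klt).
  by move=> /(_ isT).
- set m := order f d.
  have it j : j < m -> iter j.+1 g a = iter j.+1 f d.
    elim: j => [|j IH] jm.
      by rewrite /= hg // eqxx.
    rewrite iterS IH ?(ltnW jm) // hg ?Pit //.
    have n1 : iter j.+1 f d != a.
      apply/eqP => h; move: cfad; rewrite fconnect_sym // -h.
      by rewrite fconnect_iter.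
    have n2 : iter j.+1 f d != d.
      apply/eqP => h; have := findex_iter jm; rewrite h findex0 => //.
    by rewrite (negbTE n1) (negbTE n2).
  have : iter m g a = d.
    have m0 : 0 < m by apply: order_gt0.
    by rewrite -(prednK m0) it ?prednK ?ltn_predL // iter_order.
  by move=> <-; apply: fconnect_iter.
Qed.

Section Loops.
Variable L : nat.

Lemma tauK : involutive (@tau L).
Proof.
case=> [[[[i j] d] s] t].
by case: d; case: s; case: t; rewrite /tau /hedge /vedge /= ?ordSK ?ord_predK.
Qed.

Lemma sigmaK (A : {set edge L}) : involutive (sigma A).
Proof.
case=> [[e s] t]; case: (boolP (e \in A)) => eA;
by rewrite /sigma ?eA ?(negbTE eA) /= ?eA ?(negbTE eA) negbK.
Qed.

Definition sgn (h : Defs.half L) : bool :=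
  let: (e, s, t) := h in let: (i, j, d) := e in s (+) t (+) d.

Lemma sgn_sigma A h : sgn (sigma A h) = ~~ sgn h.
Proof.
case: h => [[[[i j] d] s] t]; rewrite /sigma; case: (_ \in A) => /=;
by case: d; case: s; case: t.
Qed.

Lemma sgn_tau h : sgn (tau h) = ~~ sgn h.
Proof.
case: h => [[[[i j] d] s] t].
by case: d; case: s; case: t.
Qed.

Definition ff (A : {set edge L}) (h : Defs.half L) := tau (sigma A h).

Lemma ff_inj A : injective (ff A).
Proof. by apply: inj_comp; apply: inv_inj; [apply: tauK | apply: sigmaK]. Qed.

Lemma sgn_ff A h : sgn (ff A h) = sgn h.
Proof. by rewrite /ff sgn_tau sgn_sigma negbK. Qed.

Lemma sameE_aux A x p y : path (loop_rel A) y p ->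
  fconnect (ff A) x y || fconnect (ff A) x (sigma A y) ->
  fconnect (ff A) x (last y p) || fconnect (ff A) x (sigma A (last y p)).
Proof.
elim: p y => [|z p IH] y //= /andP[r pth] Hy; apply: (IH z pth).
move: r; rewrite /loop_rel => /orP[] /eqP ->.
  by rewrite sigmaK orbC.
have back : fconnect (ff A) (sigma A (tau y)) y.
  by rewrite -{2}(tauK y) -{2}(sigmaK A (tau y)); apply: fconnect1.
have fwd : fconnect (ff A) (sigma A y) (tau y).
  by rewrite -{2}(sigmaK A y); apply: fconnect1.
case/orP: Hy => H; apply/orP.
+ right; apply: (connect_trans H).
  by rewrite fconnect_sym //; exact: ff_inj.
+ left; exact: (connect_trans H fwd).
Qed.

Lemma sameE A x y :
  same_loop A x y = fconnect (ff A) x y || fconnect (ff A) x (sigma A y).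
Proof.
apply/idP/idP.
- move=> /connectP[p pth ->]; apply: sameE_aux => //.
  by rewrite connect0.
- have sub : subrel (frel (ff A)) (connect (loop_rel A)).
    move=> u v /eqP <-; apply: (@connect_trans _ _ (sigma A u)).
      by apply: connect1; rewrite /loop_rel eqxx.
    by apply: connect1; rewrite /loop_rel eqxx orbT.
  case/orP => H.
    exact: (connect_sub sub H).
  apply: (connect_trans (connect_sub sub H)).
  by apply: connect1; rewrite /loop_rel sigmaK eqxx.
Qed.

Lemma fconnect_sgn (A : {set edge L}) x y : fconnect (ff A) x y -> sgn x = sgn y.
Proof.
apply: fconnect_invariant => z; rewrite /invariant /= sgn_ff eqxx //.
Qed.

Lemma toggle_loop (A : {set edge L}) (e : edge L) : e \notin A ->
  same_loop (e |: A) (e, false, false) (e, false, true) =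
  ~~ same_loop A (e, false, false) (e, true, false).
Proof.
move=> eA; rewrite !sameE.
have eB : e \in e |: A by rewrite setU11.
rewrite /sigma eB (negbTE eA) /=.
rewrite orb_idl; last first.
  move=> /fconnect_sgn; case: e eA eB => [[i j] d] _ _.
  by case: d.
rewrite orb_idl; last first.
  move=> /fconnect_sgn; case: e eA eB => [[i j] d] _ _.
  by case: d.
rewrite /=.
apply: (@toggle_perm _ (ff A) (ff (e |: A)) (fun x => sgn x == sgn (e, false, false))).
- exact: ff_inj.
- exact: ff_inj.
- by rewrite xpair_eqE /= andbF.
- by [].
- by case: e eA eB => [[i j] d] _ _ /=; case: d.
- by move=> x; rewrite sgn_ff.
- case=> [[e' s] t] /= /eqP.
  case: (eqVneq e' e) => [->|ne] hs.
  + have st : s = t.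
      by move: hs; case: e eA eB => [[i j] d] _ _ /=; case: d; case: s; case: t.
    subst t; case: s {hs}; rewrite !xpair_eqE !eqxx /= /ff /sigma eB (negbTE eA) //.
  + have nex : forall s1 t1, ((e', s, t) == (e, s1, t1)) = false.
      by move=> s1 t1; rewrite !xpair_eqE (negbTE ne).
    rewrite !nex /ff /sigma in_setU1 (negbTE ne) /=.
    by [].
Qed.

Definition phi (e : edge L) : edge L :=
  let: (i, j, d) := e in if d then (ordS j, i, true) else (j, ordS i, false).
Definition phiinv (e : edge L) : edge L :=
  let: (i, j, d) := e in if d then (j, ord_pred i, true) else (ord_pred j, i, false).
Lemma phiK : cancel phi phiinv.
Proof. by case=> [[i j] []] /=; rewrite ordSK. Qed.
Lemma phi_inj : injective phi. Proof. exact: can_inj phiK. Qed.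

Definition psi (h : Defs.half L) : Defs.half L :=
  let: (e, s, t) := h in (phi e, t, s).
Lemma psi_inj : injective psi.
Proof.
case=> [[e s] t] [[e' s'] t'] /= [] /phi_inj -> -> -> //.
Qed.

Definition dual (A : {set edge L}) : {set edge L} := [set e | phiinv e \notin A].
Lemma mem_dual A e : (phi e \in dual A) = (e \notin A).
Proof. by rewrite inE phiK. Qed.

Lemma tau_psi h : tau (psi h) = psi (tau h).
Proof.
case: h => [[[[i j] d] s] t].
by case: d; case: s; case: t; rewrite /= ?ordSK ?ord_predK.
Qed.

Lemma sigma_psi A h : sigma (dual A) (psi h) = psi (sigma A h).
Proof.
case: h => [[e s] t]; rewrite /= mem_dual.
by case: (e \in A).
Qed.

Lemma ff_psi A h : ff (dual A) (psi h) = psi (ff A h).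
Proof. by rewrite /ff sigma_psi tau_psi. Qed.

Lemma conj_fconnect (T : finType) (f g h : T -> T) : injective h ->
  (forall x, g (h x) = h (f x)) -> forall x y, fconnect g (h x) (h y) = fconnect f x y.
Proof.
move=> hinj hc x y.
have it n : iter n g (h x) = h (iter n f x) by elim: n => //= n ->; rewrite hc.
apply/idP/idP.
  by move=> /iter_findex; rewrite it => /hinj <-; apply: fconnect_iter.
by move=> /iter_findex <-; rewrite -it; apply: fconnect_iter.
Qed.

Lemma same_dual A x y : same_loop (dual A) (psi x) (psi y) = same_loop A x y.
Proof.
rewrite !sameE sigma_psi.
have E := @conj_fconnect _ (ff A) (ff (dual A)) psi psi_inj (ff_psi A).
exact: (f_equal2 orb (E x y) (E x (sigma A y))).
Qed.

Lemma dual_inj : injective dual.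
Proof.
move=> A B hAB; apply/setP => e.
by apply: negb_inj; rewrite -!mem_dual hAB.
Qed.

Definition sO (A : {set edge L}) e := same_loop A (e, false, false) (e, false, true).
Definition sV (A : {set edge L}) e := same_loop A (e, false, false) (e, true, false).

Definition tog (e : edge L) (A : {set edge L}) := if e \in A then A :\ e else e |: A.
Lemma togK e : involutive (tog e).
Proof.
move=> A; rewrite /tog; case: (boolP (e \in A)) => eA.
  rewrite setD11 setD1K //.
by rewrite setU11 setU1K.
Qed.

Definition o1 (A : {set edge L}) (e : edge L) : nat := (e \in A) && sO A e.
Definition o2 (A : {set edge L}) (e : edge L) : nat := (e \in A) && ~~ sO A e.
Definition v1 (A : {set edge L}) (e : edge L) : nat := (e \notin A) && sV A e.
Definition v2 (A : {set edge L}) (e : edge L) : nat := (e \notin A) && ~~ sV A e.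

Lemma tog_o1 e : \sum_A o1 A e = \sum_A v2 A e.
Proof.
rewrite (reindex_inj (inv_inj (togK e))); apply: eq_bigr => A _.
rewrite /o1 /v2 /tog; case: (boolP (e \in A)) => eA /=.
  by rewrite setD11.
by rewrite setU11 /sO toggle_loop.
Qed.

Lemma tog_o2 e : \sum_A o2 A e = \sum_A v1 A e.
Proof.
rewrite (reindex_inj (inv_inj (togK e))); apply: eq_bigr => A _.
rewrite /o2 /v1 /tog; case: (boolP (e \in A)) => eA /=.
  by rewrite setD11.
by rewrite setU11 /sO toggle_loop ?negbK.
Qed.

Lemma dual_o1 : \sum_A \sum_e o1 A e = \sum_A \sum_e v1 A e.
Proof.
rewrite [RHS](reindex_inj dual_inj); apply: eq_bigr => A _.
rewrite [RHS](reindex_inj phi_inj); apply: eq_bigr => e _.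
rewrite /o1 /v1 mem_dual negbK /sV /sO.
have -> : (phi e, false, false) = psi (e, false, false) by [].
have -> : (phi e, true, false) = psi (e, false, true) by [].
by rewrite same_dual.
Qed.

Lemma total : \sum_A \sum_e (o1 A e + o2 A e + v1 A e + v2 A e) = 2 ^ #|edge L| * #|edge L|.
Proof.
have -> : \sum_A \sum_e (o1 A e + o2 A e + v1 A e + v2 A e) = \sum_(A : {set edge L}) \sum_(e : edge L) 1.
  apply: eq_bigr => A _; apply: eq_bigr => e _.
  by rewrite /o1 /o2 /v1 /v2; case: (e \in A); case: (sO A e); case: (sV A e).
have c1 (T : finType) : \sum_(i : T) 1 = #|T| by exact: sum1_card.
have c2 (T : finType) n : \sum_(i : T) n = #|T| * n by exact: sum_nat_const.
have cs : #|{: {set edge L}}| = 2 ^ #|edge L|.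
  by have := card_powerset [set: edge L]; rewrite powersetT !cardsT.
by rewrite c1 c2 cs.
Qed.

Lemma S1_val : 4 * (\sum_A \sum_e o1 A e) = 2 ^ #|edge L| * #|edge L|.
Proof.
rewrite -total.
have h2 : \sum_A \sum_e o2 A e = \sum_A \sum_e o1 A e.
  rewrite dual_o1 exchange_big [RHS]exchange_big.
  by apply: eq_bigr => e _; apply: tog_o2.
have h4 : \sum_A \sum_e v2 A e = \sum_A \sum_e o1 A e.
  by rewrite exchange_big [RHS]exchange_big; apply: eq_bigr => e _; rewrite tog_o1.
rewrite [RHS](eq_bigr (fun A => \sum_e o1 A e + \sum_e o2 A e + \sum_e v1 A e + \sum_e v2 A e)); last first.
  move=> A _; rewrite !big_split //=. 
rewrite !big_split /= h2 -dual_o1 h4.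
by rewrite !mulSn mul0n addn0 !addnA.
Qed.


Lemma S2_eq : \sum_A \sum_e o2 A e = \sum_A \sum_e o1 A e.
Proof.
rewrite dual_o1 exchange_big [RHS]exchange_big.
by apply: eq_bigr => e _; apply: tog_o2.
Qed.

Lemma card_sum (P : pred (edge L)) : #|[set x | P x]| = \sum_x (P x : nat).
Proof.
rewrite -sum1dep_card big_mkcond; apply: eq_bigr => x _.
by case: (P x).
Qed.

Lemma N1E A : N1 A = \sum_e o1 A e.
Proof. by rewrite /N1 card_sum. Qed.
Lemma N2E A : N2 A = \sum_e o2 A e.
Proof. by rewrite /N2 card_sum. Qed.
End Loops.

Import GRing.Theory Num.Theory.
Local Open Scope ring_scope.

Lemma fin_arith (S m : nat) (X : rat) : X != 0 -> m%:R != 0 :> rat -> 4 * S%:R = X * m%:R ->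
  X^-1 * (S%:R / m%:R) = 1/4.
Proof.
move=> hX hm h. have hS : (S%:R : rat) = X * m%:R / 4.
  by rewrite -h; field.
rewrite hS. field. by rewrite hX hm.
Qed.

Lemma expect_gen (L : nat) (N : {set edge L} -> nat) : (0 < L)%N ->
  (4 * \sum_A N A = 2 ^ nedges L * nedges L)%N ->
  perc_expect (1 / 2) (fun A => (N A)%:R / (nedges L)%:R) = 1 / 4.
Proof.
move=> hL hS.
have h12 : 1 - 1 / 2 = 1 / 2 :> rat by field.
have hw (A : {set edge L}) : perc_weight (1 / 2) A = ((2 : rat) ^+ nedges L)^-1.
  rewrite /perc_weight h12 -exprD subnKC; last exact: max_card.
  by rewrite div1r exprVn.
rewrite /perc_expect.
under eq_bigr do rewrite hw.
rewrite -big_distrr /= -mulr_suml -natr_sum.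
apply: fin_arith.
- by rewrite expf_neq0.
- rewrite pnatr_eq0 -lt0n /nedges card_prod card_prod !card_ord card_bool.
  by rewrite !muln_gt0 hL.
- have := congr1 (fun n : nat => n%:R : rat) hS.
  by rewrite /= !natrM natrX.
Qed.

Theorem lemma1 (L : nat) (hL : (1 <= L)%N) :
  perc_expect (1 / 2) (@calL1 L) = 1 / 4 /\
  perc_expect (1 / 2) (@calL2 L) = 1 / 4.
Proof.
split.
- have -> : @calL1 L = (fun A => (N1 A)%:R / (nedges L)%:R) by [].
  apply: expect_gen => //.
  by under eq_bigr do rewrite N1E; apply: S1_val.
- have -> : @calL2 L = (fun A => (N2 A)%:R / (nedges L)%:R) by [].
  apply: expect_gen => //.
  by under eq_bigr do rewrite N2E; rewrite S2_eq; apply: S1_val.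
Qed.
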